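(* Let $n>1$ be an integer with prime factorization $n=\prod_{i=1}^{\ell}p_i^{a_i}$, where $p_1<p_2<\cdots<p_\ell$ are primes and each $a_i\ge 1$. Then $F_n=D_n$ if and only if \[ p_i-1=\prod_{j=1}^{i-1}p_j^{a_j}\quad\text{for all }1\le i\le \ell \] (for $i=1$ the empty product is $1$, so the condition says $p_1=2$).
   Context: For a composite integer $n$, let $d(n)$ denote the largest divisor of $n$ with $1<d(n)<n$. Define $f$ on integers $n>1$ by $f(n)=n-1$ if $n$ is prime and $f(n)=n-d(n)$ if $n$ is composite. Let $f^{(0)}(n)=n$ and $f^{(i)}=f\circ f^{(i-1)}$ for $i\ge1$. Since $f(m)<m$ for all $m>1$, iterating $f$ from $n$ eventually reaches $1$; define $F_n=\{n,f(n),f^{(2)}(n),\dots,1\}$ to be the set of all iterates up to and including the first occurrence of $1$. Let $D_n$ denote the set of all positive divisors of $n$. *)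

(* Defs.v *)
From mathcomp Require Import all_boot.
Set Implicit Arguments. Unset Strict Implicit. Unset Printing Implicit Defensive.

Definition dmax (n : nat) : nat := \max_(2 <= d < n | d %| n) d.

(* f(n) = n - 1 if n prime, n - d(n) if n composite (n > 1).
   Convention: f 1 = 1 (and f 0 = 0), so that iteration stays at 1 once reached;
   the values at 0,1 are irrelevant for the orbit F_n. *)
Definition f (n : nat) : nat :=
  if n <= 1 then n else if prime n then n.-1 else n - dmax n.

Definition inF (n m : nat) : Prop := exists i : nat, iter i f n = m.

Definition inD (n m : nat) : Prop := 0 < m /\ m %| n.

(* Main.v *)
Require Import Defs.
From mathcomp Require Import all_boot zify.

Lemma dmaxE m : 1 < m -> ~~ prime m -> dmax m = m %/ pdiv m.
Proof.
move=> m1 npm.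
set p := pdiv m.
have pp : prime p by apply: pdiv_prime.
have p1 : 1 < p by apply: prime_gt1.
have m0 : 0 < m by lia.
have pdm : p %| m by apply: pdiv_dvd.
have plt : p < m.
  rewrite ltn_neqAle pdiv_leq // andbT; apply/eqP => E; move: pp; rewrite E.
  by rewrite (negbTE npm).
have km : m %/ p * p = m by apply: divnK.
have k2 : 1 < m %/ p.
  rewrite ltnNge; apply/negP => H.
  have : m %/ p * p <= 1 * p by rewrite leq_mul2r H orbT.
  lia.
apply/eqP; rewrite eqn_leq; apply/andP; split.
- apply/bigmax_leqP_seq => d; rewrite mem_index_iota => /andP [d2 dm] ddm.
  have [e He] : exists e, m = e * d by exists (m %/ d); rewrite divnK.
  have e1 : 1 < e.
    rewrite ltnNge; apply/negP => H.
    have : e * d <= 1 * d by rewrite leq_mul2r H orbT.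
    lia.
  have pe : p <= e by apply: pdiv_min_dvd => //; rewrite He dvdn_mulr.
  rewrite leq_divRL; last by lia.
  rewrite He mulnC leq_mul2r pe orbT //.
- apply: (bigmaxn_sup_seq (m %/ p)) => //.
  + rewrite mem_index_iota k2 /=. by apply: ltn_Pdiv.
  + by apply: dvdn_div.
Qed.

Lemma fE m : 1 < m -> f m = m - m %/ pdiv m.
Proof.
move=> m1; rewrite /f leqNgt m1 /=.
case: ifP => pm; last by rewrite dmaxE // pm.
by rewrite pdiv_id // divnn prime_gt0 // subn1.
Qed.
Set Implicit Arguments. Unset Strict Implicit.

Lemma f_le m : f m <= m.
Proof. case: (ltnP 1 m) => h; first by rewrite fE // leq_subr. by rewrite /f h. Qed.

Lemma f_lt m : 1 < m -> f m < m.
Proof.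
move=> h; rewrite fE //.
have p0 := pdiv_gt0 m.
have : 0 < m %/ pdiv m by rewrite divn_gt0 // pdiv_leq //; lia.
lia.
Qed.

Lemma f_pos m : 0 < m -> 0 < f m.
Proof.
move=> h; case: (ltnP 1 m) => h1; last by rewrite /f h1.
rewrite fE //.
have : m %/ pdiv m < m by apply: ltn_Pdiv => //; apply: prime_gt1; apply: pdiv_prime.
lia.
Qed.

Lemma iter_le k x : iter k f x <= x.
Proof. elim: k => //= k IH; exact: leq_trans (f_le _) IH. Qed.

Lemma iter_pos k x : 0 < x -> 0 < iter k f x.
Proof. move=> h; elim: k => //= k IH; exact: f_pos. Qed.

Lemma inF_refl n : inF n n. Proof. by exists 0. Qed.
Lemma inF_step n x : inF n x -> inF n (f x).
Proof. by case=> i <-; exists i.+1. Qed.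
Lemma inF_trans n x y : inF n x -> inF x y -> inF n y.
Proof. by case=> i <- [j <-]; exists (j + i); rewrite iterD. Qed.
Lemma inF_pos n x : 0 < n -> inF n x -> 0 < x.
Proof. by move=> h [i <-]; apply: iter_pos. Qed.

Lemma inF_le n x y : inF n x -> inF n y -> y <= x -> inF x y.
Proof.
case=> i <- [j <-] le.
case: (leqP i j) => ij.
  by exists (j - i); rewrite -iterD subnK.
have : iter i f n <= iter j f n.
  by rewrite -(subnK (ltnW ij)) iterD; apply: iter_le.
move=> h; have -> : iter j f n = iter i f n by apply/eqP; rewrite eqn_leq le h.
exact: inF_refl.
Qed.

Definition Pq q x := forall r, prime r -> r %| x -> r < q.

Lemma Pq_f q x : 0 < x -> Pq q x -> Pq q (f x).
Proof.
move=> x0 P; case: (ltnP 1 x) => x1; last by rewrite /f x1.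
rewrite fE //.
set p := pdiv x.
have pp : prime p by apply: pdiv_prime.
have pdx : p %| x by apply: pdiv_dvd.
have E : x - x %/ p = p.-1 * (x %/ p).
  rewrite -{1}(divnK pdx) mulnC -{2}(mul1n (x %/ p)) -mulnBl subn1 //.
rewrite E => r pr; rewrite Euclid_dvdM // => /orP [h|h].
- have := P p pp pdx; have := prime_gt1 pp.
  have : r <= p.-1 by apply: dvdn_leq => //; have := prime_gt1 pp; lia.
  lia.
- apply: P => //; exact: dvdn_trans h (dvdn_div pdx).
Qed.

Lemma Pq_inF q x y : 0 < x -> Pq q x -> inF x y -> Pq q y.
Proof.
move=> x0 P [i <-]; elim: i => //= i IH; apply: Pq_f => //; exact: iter_pos.
Qed.

Lemma pdiv_mulq q x k : prime q -> 1 < x -> Pq q x -> pdiv (x * q ^ k) = pdiv x.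
Proof.
move=> pq x1 P.
have q0 : 0 < q ^ k by rewrite expn_gt0 prime_gt0.
have xq1 : 1 < x * q ^ k by exact: leq_trans x1 (leq_pmulr _ q0).
apply/eqP; rewrite eqn_leq; apply/andP; split.
  apply: pdiv_min_dvd; first exact: prime_gt1 (pdiv_prime x1).
  by apply: dvdn_mulr; apply: pdiv_dvd.
have pr := pdiv_prime xq1.
have := pdiv_dvd (x * q ^ k); rewrite Euclid_dvdM // => /orP [h|h].
  by apply: pdiv_min_dvd => //; apply: prime_gt1.
have hq : pdiv (x * q ^ k) = q.
  by apply/eqP; rewrite -(dvdn_prime2 pr pq); move: h; rewrite Euclid_dvdX // => /andP [] .
rewrite hq; apply: ltnW; apply: P; [exact: pdiv_prime | exact: pdiv_dvd].
Qed.

Lemma f_mulq q x k : prime q -> 1 < x -> Pq q x -> f (x * q ^ k) = f x * q ^ k.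
Proof.
move=> pq x1 P.
have q0 : 0 < q ^ k by rewrite expn_gt0 prime_gt0.
have xq1 : 1 < x * q ^ k by exact: leq_trans x1 (leq_pmulr _ q0).
rewrite fE // fE // pdiv_mulq // mulnBl divn_mulAC //; exact: pdiv_dvd.
Qed.

Lemma liftF q x y k : prime q -> 0 < x -> Pq q x -> inF x y -> inF (x * q ^ k) (y * q ^ k).
Proof.
move=> pq x0 P [i <-]; elim: i => [|i IH]; first exact: inF_refl.
rewrite /=; set z := iter i f x in IH *.
have z0 : 0 < z by apply: iter_pos.
have Pz : Pq q z by apply: (Pq_inF x0 P); exists i.
case: (ltnP 1 z) => z1.
  by rewrite -f_mulq //; apply: inF_step.
have -> : f z = z by rewrite /f z1.
exact: IH.
Qed.

Lemma f_qpow q k : prime q -> f (q ^ k.+1) = q.-1 * q ^ k.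
Proof.
move=> pq.
have q1 := prime_gt1 pq.
have h : 1 < q ^ k.+1 by rewrite -{1}(expn0 q) ltn_exp2l.
rewrite fE // pdiv_pfactor // expnS mulKn; last by lia.
by rewrite -{2}(mul1n (q ^ k)) -mulnBl subn1.
Qed.

Lemma Pq_coprime q x : prime q -> Pq q x -> coprime q x.
Proof.
move=> pq P; rewrite prime_coprime //; apply/negP => h.
by have := P q pq h; rewrite ltnn.
Qed.

Lemma decomp q M a x : prime q -> 0 < M -> coprime q M -> 0 < x -> x %| M * q ^ a ->
  exists d k, [/\ x = d * q ^ k, d %| M & k <= a].
Proof.
move=> pq M0 cqM x0 xd.
have [d cqd E] := pfactor_coprime pq x0.
exists d, (logn q x); split => //.
  have : d %| M * q ^ a by apply: dvdn_trans xd; rewrite E dvdn_mulr.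
  rewrite Gauss_dvdl //; apply: coprimeXr; by rewrite coprime_sym.
have Mq : 0 < M * q ^ a by rewrite muln_gt0 M0 expn_gt0 prime_gt0.
have h := dvdn_leq_log q Mq xd.
have qa : 0 < q ^ a by rewrite expn_gt0 prime_gt0.
by rewrite lognM // (logn_coprime cqM) pfactorK // in h.
Qed.

Lemma f_prime q : prime q -> f q = q.-1.
Proof. by move=> pq; have := f_qpow 0 pq; rewrite expn1 expn0 muln1. Qed.

Lemma dyn q M a : prime q -> 0 < M -> Pq q M -> 0 < a ->
 (forall m, inF (M * q ^ a) m <-> inD (M * q ^ a) m) <->
 (q = M.+1 /\ forall m, inF M m <-> inD M m).
Proof.
move=> pq M0 PM a0.
have q1 := prime_gt1 pq.
have cqM := Pq_coprime pq PM.
have qa0 : 0 < q ^ a by rewrite expn_gt0 prime_gt0.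
set n := M * q ^ a.
have n0 : 0 < n by rewrite muln_gt0 M0.
have Mn : M %| n by apply: dvdn_mulr.
split.
- move=> H.
  have hq : inF n q.
    apply/H; split; first lia.
    by apply: dvdn_mull; apply: dvdn_exp.
  have hq1 : q.-1 %| n by have [] := (H _).1 (inF_step hq); rewrite f_prime.
  have hq1M : q.-1 %| M.
    move: hq1; rewrite /n Gauss_dvdl //; apply: coprimeXr; apply: coprimePn; lia.
  have le1 : q.-1 <= M by apply: dvdn_leq.
  have hM : inF n M by apply/H; split.
  have lt2 : M < q.
    rewrite ltnNge; apply/negP => qM.
    have := Pq_inF M0 PM (inF_le hM hq qM) pq (dvdnn q).
    by rewrite ltnn.
  split; first lia.
  move=> m; split.
  + move=> hm.
    have hmn : inF n m by apply: inF_trans hM hm.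
    have [m0 mn] := H m; have [m0' mdn] := m0 hmn.
    split => //.
    have Pm := Pq_inF M0 PM hm.
    move: mdn; rewrite /n Gauss_dvdl //; apply: coprimeXr.
    by rewrite coprime_sym; apply: Pq_coprime.
  + move=> [m0 mM].
    have hmn : inF n m by apply/H; split => //; apply: dvdn_trans mM Mn.
    apply: inF_le hM hmn _; exact: dvdn_leq.
- move=> [hq HM].
  have H1 : inF M 1 by apply/HM; split.
  have A : forall j, j <= a -> inF n (M * q ^ (a - j)).
    elim=> [|j IH] ja; first by rewrite subn0; apply: inF_refl.
    have := IH (ltnW ja).
    have -> : a - j = (a - j.+1).+1 by lia.
    move=> h.
    have h2 := inF_trans h (liftF (a - j.+1).+1 pq M0 PM H1).
    rewrite mul1n in h2.
    by have := inF_step h2; rewrite f_qpow // {1}hq.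
  have A' : forall k, k <= a -> inF n (M * q ^ k).
    by move=> k ka; have := A (a - k) (leq_subr _ _); rewrite subKn.
  move=> m; split.
  + case=> i <-; elim: i => [|i IH]; first by split.
    rewrite /=; set x := iter i f n in IH *.
    case: IH => x0 xn.
    have [d [k [E dM ka]]] := decomp pq M0 cqM x0 xn.
    have d0 : 0 < d by move: x0; rewrite E muln_gt0 => /andP [].
    case: (ltnP 1 d) => d1.
      have Pd : Pq q d by move=> r pr rd; apply: PM => //; apply: dvdn_trans rd dM.
      rewrite E f_mulq //.
      have hd : inF M (f d) by apply: inF_step; apply/HM.
      have [fd0 fdM] := (HM _).1 hd.
      split; first by rewrite muln_gt0 fd0 expn_gt0 prime_gt0.
      by apply: dvdn_mul => //; apply: dvdn_exp2l.
    have d_1 : d = 1 by lia.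
    move: E; rewrite d_1 mul1n; case: k ka => [|k] ka E.
      by rewrite E expn0 /f.
    rewrite E f_qpow // {1}hq /=.
    split; first by rewrite muln_gt0 M0 expn_gt0 prime_gt0.
    by apply: dvdn_mul => //; apply: dvdn_exp2l; apply: ltnW.
  + move=> [m0 mn].
    have [d [k [E dM ka]]] := decomp pq M0 cqM m0 mn.
    have d0 : 0 < d by move: m0; rewrite E muln_gt0 => /andP [].
    have hd : inF M d by apply/HM.
    rewrite E; apply: inF_trans (A' k ka) (liftF k pq M0 PM hd).
Qed.

Definition cond n := forall i : nat, i < size (primes n) ->
     (nth 0 (primes n) i).-1 =
     \prod_(j < i) (nth 0 (primes n) j) ^ logn (nth 0 (primes n) j) n.

Lemma prodM M : 0 < M ->
  \prod_(j < size (primes M)) (nth 0 (primes M) j) ^ logn (nth 0 (primes M) j) M = M.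
Proof.
move=> M0.
rewrite [RHS](prod_prime_decomp M0) prime_decompE big_map (big_nth 0) big_mkord.
by apply: eq_bigr.
Qed.

Lemma sorted_rcons_lt s q : sorted ltn s -> (forall x, x \in s -> x < q) -> sorted ltn (rcons s q).
Proof.
case: s => [|x s] //= hs H.
rewrite rcons_path hs /=; apply: H; apply: mem_last.
Qed.

Lemma primes_rcons q M a : prime q -> 0 < M -> Pq q M -> 0 < a ->
  primes (M * q ^ a) = rcons (primes M) q.
Proof.
move=> pq M0 PM a0.
apply: (irr_sorted_eq ltn_trans ltnn); first exact: sorted_primes.
  apply: sorted_rcons_lt; first exact: sorted_primes.
  by move=> x; rewrite mem_primes => /and3P [px _ xd]; apply: PM.
move=> p; rewrite primesM // ?expn_gt0 ?prime_gt0 // primesX // (primes_prime pq).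
by rewrite mem_rcons in_cons inE orbC.
Qed.

Lemma cond_step q M a : prime q -> 0 < M -> Pq q M -> 0 < a ->
  cond (M * q ^ a) <-> cond M /\ q.-1 = M.
Proof.
move=> pq M0 PM a0.
rewrite /cond primes_rcons // size_rcons.
set s := primes M.
have hp : forall i, i < size s -> logn (nth 0 s i) (M * q ^ a) = logn (nth 0 s i) M.
  move=> i lt.
  have : nth 0 s i \in primes M by apply: mem_nth.
  rewrite mem_primes => /and3P [pp _ pd].
  have := PM _ pp pd => pq'.
  rewrite (lognM _ M0) ?expn_gt0 ?(prime_gt0 pq) // lognX (logn_prime _ pq).
  have -> : (nth 0 s i == q) = false by apply/eqP; lia.
  by rewrite muln0 addn0.
have hb : forall i, i <= size s ->
   \prod_(j < i) nth 0 (rcons s q) j ^ logn (nth 0 (rcons s q) j) (M * q ^ a) =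
   \prod_(j < i) nth 0 s j ^ logn (nth 0 s j) M.
  move=> i le; apply: eq_bigr => j _.
  have js : j < size s by apply: leq_trans (ltn_ord j) le.
  by rewrite nth_rcons js hp.
split.
- move=> H; split.
  + move=> i lt; have := H i (ltnW lt); rewrite nth_rcons lt hb //; exact: ltnW.
  + have := H (size s) (ltnSn _); rewrite nth_rcons ltnn eqxx hb // prodM //.
- move=> [HM e] i; rewrite ltnS leq_eqVlt => /orP [/eqP ->|lt].
    by rewrite nth_rcons ltnn eqxx hb // prodM.
  by rewrite nth_rcons lt hb ?HM //; apply: ltnW.
Qed.

Lemma main n : 0 < n -> ((forall m, inF n m <-> inD n m) <-> cond n).
Proof.
elim/ltn_ind: n => n IH n0.
case: (ltnP 1 n) => n1; last first.
  have -> : n = 1 by lia.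
  split; last first.
    move=> _ m; split.
      case=> i <-; have -> : iter i f 1 = 1 by elim: i => //= i ->.
      by split.
    by case=> m0; rewrite dvdn1 => /eqP ->; apply: inF_refl.
  by move=> _ i; rewrite /cond.
set q := max_pdiv n.
have pq : prime q by apply: max_pdiv_prime.
have [M cqM E] := pfactor_coprime pq n0.
have a0 : 0 < logn q n by rewrite logn_gt0 mem_primes pq n0 max_pdiv_dvd.
move: E a0; set a := logn q n => E a0; clearbody a.
have qa1 : 1 < q ^ a by rewrite -{1}(expn0 q) ltn_exp2l // prime_gt1.
have M0 : 0 < M by move: n0; rewrite E muln_gt0 => /andP [].
have PM : Pq q M.
  move=> r pr rM.
  have rn : r %| n by rewrite E dvdn_mulr.
  have : r <= q by apply: max_pdiv_max; rewrite mem_primes pr n0 rn.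
  rewrite leq_eqVlt => /orP [/eqP rq|//].
  by move: cqM; rewrite prime_coprime // -rq rM.
have Mn : M < n by rewrite E -{1}(muln1 M) ltn_pmul2l.
rewrite E dyn // cond_step // (IH M Mn M0).
split; move=> [h1 h2]; split => //; lia.
Qed.

Unset Implicit Arguments.
Theorem lemma2 (n : nat) (hn : 1 < n) :
  (forall m : nat, inF n m <-> inD n m) <->
  (forall i : nat, i < size (primes n) ->
     (nth 0 (primes n) i).-1 =
     \prod_(j < i) (nth 0 (primes n) j) ^ logn (nth 0 (primes n) j) n).
Proof. apply: main; lia. Qed.
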